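(* Let $n\ge 1$, let $\mathcal{D}\subseteq\mathbb{R}^{2n+1}$ be open and let $F:\mathcal{D}\to\mathbb{R}$ be twice continuously differentiable. Write $\theta=(\mathbf{c},\mathbf{b})$ with $\mathbf{c}\in\mathbb{R}^{n+1}$, $\mathbf{b}\in\mathbb{R}^n$, and partition the Hessian as $$\nabla^2_\theta F(\theta)=\begin{pmatrix}\mathcal{H}_{11}(\theta)&\mathcal{H}_{12}(\theta)\\ \mathcal{H}_{21}(\theta)&\mathcal{H}_{22}(\theta)\end{pmatrix},\quad \mathcal{H}_{11}=\nabla^2_{\mathbf{c}\mathbf{c}}F,\ \mathcal{H}_{12}=\nabla^2_{\mathbf{c}\mathbf{b}}F,\ \mathcal{H}_{21}=\nabla^2_{\mathbf{b}\mathbf{c}}F,\ \mathcal{H}_{22}=\nabla^2_{\mathbf{b}\mathbf{b}}F.$$ Let $\mathcal{O}\subseteq\mathcal{D}$ be an open set on which the invertibility assumption holds for the chosen scheme, and let $G=(G_1,G_2):\mathcal{O}\to\mathbb{R}^{2n+1}$ be the block Newton map of either the L-GS or the NL-GS scheme (defined in the context). Let $\theta^*\in\mathcal{O}$ be a fixed point of $G$ and assume that $\nabla^2_\theta F(\theta^* )$ is symmetric positive definite. Then $G$ is differentiable at $\theta^*$ with Jacobian $$\mathbf{J}_G(\theta^* )=I_{2n+1}-B(\theta^* )^{-1}\nabla^2_\theta F(\theta^* ),\qquad B(\theta)=\begin{pmatrix}\mathcal{H}_{11}(\theta)&\mathbf{0}\\ \mathcal{H}_{21}(\theta)&\mathc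al{H}_{22}(\theta)\end{pmatrix}.$$
   Context: Block Newton maps. For $\theta=(\mathbf{c},\mathbf{b})$ define $G_1(\theta)=\mathbf{c}-\mathcal{H}_{11}(\theta)^{-1}\nabla_{\mathbf{c}}F(\theta)$. For the NL-GS (block nonlinear Gauss–Seidel) scheme, $G_2(\theta)=\mathbf{b}-\mathcal{H}_{22}(G_1(\theta),\mathbf{b})^{-1}\nabla_{\mathbf{b}}F(G_1(\theta),\mathbf{b})$. For the L-GS (block linear Gauss–Seidel) scheme, $G_2(\theta)=\mathbf{b}-\mathcal{H}_{22}(\theta)^{-1}\big(\nabla_{\mathbf{b}}F(\theta)+\mathcal{H}_{21}(\theta)(G_1(\theta)-\mathbf{c})\big)$. Then $G(\theta)=(G_1(\theta),G_2(\theta))$. Invertibility assumption on $\mathcal{O}$: for every $\theta=(\mathbf{c},\mathbf{b})\in\mathcal{O}$, $\mathcal{H}_{11}(\theta)$ is invertible, and moreover $\mathcal{H}_{22}(G_1(\theta),\mathbf{b})$ is invertible (with $(G_1(\theta),\mathbf{b})\in\mathcal{D}$) for NL-GS, respectively $\mathcal{H}_{22}(\theta)$ is invertible for L-GS. $I_{2n+1}$ is the identity matrix of order $2n+1$. *)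

(* Defs.v *)
(* Column vectors 'cV[R]_(n.+1 + n), theta = col_mx c b. *)
From HB Require Import structures.
From mathcomp Require Import all_boot all_order all_algebra.
From mathcomp Require Import all_classical all_reals all_analysis.
Set Implicit Arguments. Unset Strict Implicit. Unset Printing Implicit Defensive.
Import Order.TTheory GRing.Theory Num.Theory.
Import numFieldNormedType.Exports.
Local Open Scope classical_set_scope.
Local Open Scope ring_scope.

Section Defs.
Variables (R : realType) (n : nat).
Local Notation V := 'cV[R]_(n.+1 + n).

Definition ebasis (i : 'I_(n.+1 + n)) : V := delta_mx i 0.

Definition partial (i : 'I_(n.+1 + n)) (F : V -> R) : V -> R :=
  fun x => 'D_(ebasis i) F x.

Definition C2_on (D : set V) (F : V -> R) : Prop :=
  (forall x, D x -> differentiable F x) /\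
  (forall i x, D x -> differentiable (partial i F) x) /\
  (forall i j x, D x -> {for x, continuous (partial j (partial i F))}).

Definition grad (F : V -> R) (x : V) : V := \col_i partial i F x.
Definition hessian (F : V -> R) (x : V) : 'M[R]_(n.+1 + n) :=
  \matrix_(i, j) partial j (partial i F) x.

Definition gradc F x : 'cV[R]_(n.+1) := usubmx (grad F x).
Definition gradb F x : 'cV[R]_n := dsubmx (grad F x).
Definition H11 F x : 'M[R]_(n.+1) := ulsubmx (hessian F x).
Definition H12 F x : 'M[R]_(n.+1, n) := ursubmx (hessian F x).
Definition H21 F x : 'M[R]_(n, n.+1) := dlsubmx (hessian F x).
Definition H22 F x : 'M[R]_n := drsubmx (hessian F x).

Definition Bmat F x : 'M[R]_(n.+1 + n) := block_mx (H11 F x) 0 (H21 F x) (H22 F x).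

Inductive scheme := LGS | NLGS.

Definition G1 F (th : V) : 'cV[R]_(n.+1) :=
  usubmx th - invmx (H11 F th) *m gradc F th.

Definition G2 (s : scheme) F (th : V) : 'cV[R]_n :=
  let c := usubmx th in let b := dsubmx th in
  match s with
  | NLGS => b - invmx (H22 F (col_mx (G1 F th) b)) *m gradb F (col_mx (G1 F th) b)
  | LGS => b - invmx (H22 F th) *m (gradb F th + H21 F th *m (G1 F th - c))
  end.

Definition Gmap (s : scheme) F (th : V) : V := col_mx (G1 F th) (G2 s F th).

Definition invertibility (s : scheme) (D O : set V) F : Prop :=
  forall th, O th ->
    H11 F th \in unitmx /\
    match s with
    | NLGS => D (col_mx (G1 F th) (dsubmx th)) /\
              H22 F (col_mx (G1 F th) (dsubmx th)) \in unitmx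
    | LGS => H22 F th \in unitmx
    end.

Definition sym_pos_def (m : nat) (A : 'M[R]_m) : Prop :=
  A^T = A /\ forall v : 'cV[R]_m, v != 0 -> 0 < (v^T *m A *m v) 0 0.

End Defs.

(* Main.v *)
Require Import Defs.
From HB Require Import structures.
From mathcomp Require Import all_boot all_order all_algebra.
From mathcomp Require Import all_classical all_reals all_analysis.
From mathcomp Require Import ring lra.
Import Order.TTheory GRing.Theory Num.Theory.
Import numFieldNormedType.Exports.
Local Open Scope classical_set_scope.
Local Open Scope ring_scope.
Set Implicit Arguments. Unset Strict Implicit. Unset Printing Implicit Defensive.

Section Aux.
Variable R : realType.

Lemma mx_cvg {T} {F : set_system T} {FF : Filter F} p q (g : T -> 'M[R]_(p,q))
  (l : 'M[R]_(p,q)) :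
  (forall i j, (fun y => g y i j) @ F --> l i j) -> g @ F --> l.
Proof.
move=> H; apply/cvgrPdist_le => e e0.
near=> y.
rewrite /Num.Def.normr/= mx_normrE (bigmax_le _ (ltW e0))//= => ij _.
rewrite !mxE /=; move: ij; near: y; apply: filter_forall => ij.
exact: ((cvgrPdist_le _ _).1 (H ij.1 ij.2) e e0).
Unshelve. all: by end_near. Qed.

Lemma entry_cvg {T} {F : set_system T} {FF : Filter F} p q (g : T -> 'M[R]_(p,q))
  (l : 'M[R]_(p,q)) i j : g @ F --> l -> (fun y => g y i j) @ F --> l i j.
Proof.
move=> H; have := @cvg_comp _ _ _ g (fun M : 'M[R]_(p,q) => M i j) F _ _ H (@coord_continuous R p q i j l). by [].
Qed.

Lemma sum_cvg {T} {F : set_system T} {FF : Filter F} (I : Type) (r : seq I) (P : pred I)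
  (f : I -> T -> R) (l : I -> R) :
  (forall i, f i @ F --> l i) ->
  (fun y => \sum_(i <- r | P i) f i y) @ F --> \sum_(i <- r | P i) l i.
Proof.
move=> H; elim: r => [|a r IH].
  under eq_cvg do rewrite big_nil. rewrite big_nil; exact: cvg_cst.
under eq_cvg do rewrite big_cons. rewrite big_cons.
case: (P a) => //; exact: cvgD.
Qed.

Lemma prod_cvg {T} {F : set_system T} {FF : Filter F} (I : Type) (r : seq I) (P : pred I)
  (f : I -> T -> R) (l : I -> R) :
  (forall i, f i @ F --> l i) ->
  (fun y => \prod_(i <- r | P i) f i y) @ F --> \prod_(i <- r | P i) l i.
Proof.
move=> H; elim: r => [|a r IH].
  under eq_cvg do rewrite big_nil. rewrite big_nil; exact: cvg_cst.
under eq_cvg do rewrite big_cons. rewrite big_cons.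
case: (P a) => //; exact: cvgM.
Qed.


Lemma det_cont m : continuous (fun M : 'M[R]_m => \det M).
Proof.
move=> M; rewrite /determinant.
apply: (sum_cvg (F := nbhs M)) => s; apply: cvgMl_tmp; apply: (prod_cvg (F := nbhs M)) => i.
exact: coord_continuous.
Qed.

Lemma minor_cont m (i j : 'I_m.+1) :
  continuous (fun M : 'M[R]_m.+1 => row' i (col' j M)).
Proof.
move=> M; apply: (mx_cvg (F := nbhs M)) => a b.
rewrite !mxE.
under eq_cvg do rewrite !mxE.
exact: coord_continuous.
Qed.

Lemma invmx_cont m (M0 : 'M[R]_m) : M0 \in unitmx -> {for M0, continuous (fun M : 'M[R]_m => invmx M)}.
Proof.
move=> u; have d0 : \det M0 != 0 by rewrite -unitfE -unitmxE.
have nu : \forall M \near M0, \det M != 0.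
  have := (cvgrPdist_lt _ _).1 (@det_cont m M0) `|\det M0|.
  rewrite normr_gt0 => /(_ _ d0); apply: filterS => M HM.
  apply/negP => /eqP E; move: HM; rewrite E subr0 ltxx.
  by [].
pose g := fun M : 'M[R]_m => (\det M)^-1 *: \adj M.
have gM0 : g M0 = invmx M0 by rewrite /g /invmx u.
have ne : {near nbhs M0, g =1 (fun M : 'M[R]_m => invmx M)}.
  apply: filterS nu => M HM; rewrite /g /invmx unitmxE unitfE.
  by rewrite HM.
apply: cvg_trans (near_eq_cvg ne) _.
rewrite -gM0; apply: mx_cvg => a b; rewrite /g !mxE.
under eq_cvg do rewrite !mxE.
apply: cvgM; first exact: (cvgV d0 (@det_cont m M0)).
case: m M0 u d0 nu a b g gM0 ne => [|m] M0 u d0 nu a b g gM0 ne; first by case: a.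
rewrite /cofactor; apply: cvgMl_tmp.
have := (cvg_comp _ _ (@minor_cont m b a M0) (@det_cont m _)). exact.
Unshelve. all: by end_near. Qed.


Lemma mulmx_cont p q r (A : 'M[R]_(p,q)) : continuous (fun v : 'M[R]_(q,r) => A *m v).
Proof.
move=> v; apply: (mx_cvg (F := nbhs v)) => i j; rewrite mxE.
under eq_cvg do rewrite mxE.
apply: (sum_cvg (F := nbhs v)) => k; apply: cvgMl_tmp; exact: coord_continuous.
Qed.

Lemma mulmx_is_diff p q r (A : 'M[R]_(p,q)) (v : 'M[R]_(q,r)) :
  is_diff v (fun w => A *m w) (fun w => A *m w).
Proof.
have lin : linear (fun w : 'M[R]_(q,r) => A *m w).
  by move=> a u w; rewrite mulmxDr scalemxAr.
pose L : {linear 'M[R]_(q,r) -> 'M[R]_(p,r)} :=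
  HB.pack (fun w : 'M[R]_(q,r) => A *m w) (GRing.isLinear.Build _ _ _ _ _ lin).
have cL : continuous L by exact: mulmx_cont.
apply: DiffDef; first exact: (linear_differentiable (f := L) _ cL).
exact: (diff_lin (f := L) _ cL).
Qed.

Lemma entry_le p q (M : 'M[R]_(p,q)) i j : `|M i j| <= `|M|.
Proof.
rewrite [in leRHS]/Num.Def.normr /= mx_normrE.
exact: (le_bigmax _ (fun ij : 'I_p * 'I_q => `|M ij.1 ij.2|) (i, j)).
Qed.

Lemma mulmx_norm p q r (A : 'M[R]_(p,q)) (v : 'M[R]_(q,r)) :
  `|A *m v| <= q%:R * `|A| * `|v|.
Proof.
rewrite [in leLHS]/Num.Def.normr /= mx_normrE.
apply: bigmax_le => [|ij _]; first by rewrite !mulr_ge0.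
rewrite mxE /=; apply: (le_trans (ler_norm_sum _ _ _)).
apply: (@le_trans _ _ (\sum_(k < q) `|A| * `|v|)).
  apply: ler_sum => k _; rewrite normrM; apply: ler_pM => //; exact: entry_le.
by rewrite sumr_const card_ord -mulrA mulr_natl.
Qed.

Lemma zero_diff (V W : normedModType R) (r : V -> W) x : r x = 0 ->
  (forall e, 0 < e -> \forall h \near (0:V), `|r (h + x)| <= e * `|h|) ->
  is_diff x r (0 : V -> W).
Proof.
move=> r0 H.
have lin : linear (fun _ : V => (0 : W)) by move=> a u w; rewrite scaler0 addr0.
pose Z : {linear V -> W} := HB.pack (fun _ : V => (0 : W)) (GRing.isLinear.Build _ _ _ _ _ lin).
have eq : r \o shift x = cst (r x) + Z +o_ 0 id.
  apply/eqaddoP => e e0; apply: filterS (H e e0) => h.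
  by rewrite /= r0 !addr0 subr0.
have c0 : continuous Z by move=> ?; exact: cvg_cst.
have E := diff_unique c0 eq.
apply: DiffDef => //; apply/diff_locallyP; rewrite E; split => //.
Qed.


Lemma prod_diff (V : normedModType R) p q (A : V -> 'M[R]_(p,q))
  (g : V -> 'cV[R]_q) x :
  {for x, continuous A} -> differentiable g x -> g x = 0 ->
  is_diff x (fun y => A y *m g y) (fun h => A x *m 'd g x h).
Proof.
move=> HA dg gx0.
have -> : (fun y => A y *m g y) =
  (fun y => A x *m g y) + (fun y => (A y - A x) *m g y).
  by apply/funext => y; rewrite !fctE mulmxBl addrC subrK.
have H1 : is_diff x (fun y => A x *m g y) (fun h => A x *m 'd g x h).
  have hm := mulmx_is_diff (A x) (g x).
  have -> : (fun h => A x *m 'd g x h) = (fun w => A x *m w) \o 'd g x by [].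
  apply: DiffDef.
    exact: (differentiable_comp dg (ex_diff (is_diff_def := hm))).
  by rewrite (diff_comp dg (ex_diff (is_diff_def := hm))) (diff_val (is_diff_def := hm)).
suff H2 : is_diff x (fun y => (A y - A x) *m g y) (0 : V -> 'cV[R]_p).
  by have := is_diffD H1 H2; rewrite addr0.
apply: zero_diff; first by rewrite subrr mul0mx.
move=> e e0.
have [k k0 Hk] := linear_lipschitz (diff_continuous dg).
have dl := diff_locally dg.
move/eqaddoP: dl => /(_ 1 ltr01) dl.
pose eps := e / ((q%:R + 1) * (k + 1)).
have eps0 : 0 < eps by rewrite divr_gt0 // mulr_gt0 // ?addr_gt0 // ltr_spaddr.
have HA0 : \forall t \near x, `|A x - A t| <= eps by exact: ((cvgrPdist_le _ _).1 HA).
have HA' := (nbhs0P _ x).1 HA0.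
near=> h.
have h1 : `|A (h + x) - A x| <= eps.
  near: h; apply: filterS HA' => z; by rewrite [z + x]addrC distrC.
have h2 : `|g (h + x)| <= (k + 1) * `|h|.
  have : `|g (h + x) - (g x + 'd g x h)| <= 1 * `|h|.
    by near: h; apply: filterS dl => h /=.
  rewrite gx0 add0r mul1r => H3.
  rewrite mulrDl mul1r.
  apply: (le_trans _ (lerD (Hk h) H3)).
  by rewrite addrC -[X in `|X| <= _](subrK ('d g x h)) [X in _ <= X]addrC ler_normD.
apply: (le_trans (mulmx_norm _ _)).
apply: (@le_trans _ _ ((q%:R + 1) * eps * ((k + 1) * `|h|))).
  apply: ler_pM => //; apply: ler_pM => //; first by rewrite lerDl.
have q0 : q%:R + 1 != 0 :> R by rewrite lt0r_neq0 // ltr_wpDl.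
have k1 : k + 1 != 0 by rewrite lt0r_neq0 // addr_gt0.
have -> : (q%:R + 1) * eps * ((k + 1) * `|h|) = e * `|h|.
  by rewrite /eps; field; rewrite q0 k1.
by [].
Unshelve. all: by end_near. Qed.


Lemma isdD (V W : normedModType R) (f g df dg : V -> W) x :
  is_diff x f df -> is_diff x g dg ->
  is_diff x (fun y => f y + g y) (fun h => df h + dg h).
Proof. move=> H1 H2; exact: (is_diffD H1 H2). Qed.

Lemma isdB (V W : normedModType R) (f g df dg : V -> W) x :
  is_diff x f df -> is_diff x g dg ->
  is_diff x (fun y => f y - g y) (fun h => df h - dg h).
Proof. move=> H1 H2; exact: (is_diffB H1 H2). Qed.

Lemma isd_mul (V : normedModType R) p q r (M : 'M[R]_(p,q)) (f df : V -> 'M[R]_(q,r)) x :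
  is_diff x f df -> is_diff x (fun y => M *m f y) (fun h => M *m df h).
Proof.
move=> H.
have hm := mulmx_is_diff M (f x).
have -> : (fun h => M *m df h) = (fun w => M *m w) \o df by [].
have -> : (fun y => M *m f y) = (fun w => M *m w) \o f by [].
apply: DiffDef.
  exact: (differentiable_comp (ex_diff (is_diff_def := H)) (ex_diff (is_diff_def := hm))).
rewrite (diff_comp (ex_diff (is_diff_def := H)) (ex_diff (is_diff_def := hm))).
by rewrite (diff_val (is_diff_def := hm)) (diff_val (is_diff_def := H)).
Qed.

Lemma isd_comp (U V W : normedModType R) (f df : U -> V) (g dg : V -> W) x :
  is_diff x f df -> is_diff (f x) g dg ->
  is_diff x (fun y => g (f y)) (fun h => dg (df h)).
Proof.
move=> H1 H2; apply: DiffDef.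
  exact: (differentiable_comp (ex_diff (is_diff_def := H1)) (ex_diff (is_diff_def := H2))).
rewrite (diff_comp (ex_diff (is_diff_def := H1)) (ex_diff (is_diff_def := H2))).
by rewrite (diff_val (is_diff_def := H2)) (diff_val (is_diff_def := H1)).
Qed.

Lemma isd_sum (V W : normedModType R) m (f df : 'I_m -> V -> W) x :
  (forall i, is_diff x (f i) (df i)) ->
  is_diff x (fun y => \sum_i f i y) (fun h => \sum_i df i h).
Proof.
move=> H; rewrite -!fct_sumE.
elim/big_ind2 : _ => [|f1 df1 f2 df2 H1 H2|i _]; last exact: H.
  exact: is_diff_cst.
exact: is_diffD.
Qed.

Lemma prod_isd (V : normedModType R) p q (A : V -> 'M[R]_(p,q))
  (g dg : V -> 'cV[R]_q) x :
  {for x, continuous A} -> is_diff x g dg -> g x = 0 ->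
  is_diff x (fun y => A y *m g y) (fun h => A x *m dg h).
Proof.
move=> HA H g0.
have := prod_diff HA (ex_diff (is_diff_def := H)) g0.
by rewrite (diff_val (is_diff_def := H)).
Qed.

Lemma cont_entries m1 n1 p q (f : 'M[R]_(m1,n1) -> 'M[R]_(p,q))
  (r : 'I_p -> 'I_m1) (c : 'I_q -> 'I_n1) :
  (forall M a b, f M a b = M (r a) (c b)) -> continuous f.
Proof.
move=> Hf M; apply: (mx_cvg (F := nbhs M)) => a b; rewrite Hf.
under eq_cvg do rewrite Hf.
exact: coord_continuous.
Qed.

Lemma usub_mul m1 m2 k (A : 'M[R]_(m1 + m2, k)) : usubmx A = row_mx 1%:M 0 *m A.
Proof. by rewrite -{2}(vsubmxK A) mul_row_col mul1mx mul0mx addr0. Qed.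

Lemma dsub_mul m1 m2 k (A : 'M[R]_(m1 + m2, k)) : dsubmx A = row_mx 0 1%:M *m A.
Proof. by rewrite -{2}(vsubmxK A) mul_row_col mul1mx mul0mx add0r. Qed.

Lemma col_mul m1 m2 k (a : 'M[R]_(m1, k)) (b : 'M[R]_(m2, k)) :
  col_mx a b = col_mx 1%:M 0 *m a + col_mx 0 1%:M *m b.
Proof. by rewrite !mul_col_mx !mul1mx !mul0mx add_col_mx addr0 add0r. Qed.


Section Grad.
Variable n : nat.
Local Notation V := 'cV[R]_(n.+1 + n).

Lemma dexpand (k : V -> R) y h : differentiable k y ->
  'd k y h = \sum_j h j 0 * partial j k y.
Proof.
move=> dk; rewrite {1}(matrix_sum_delta h) linear_sum.
apply: eq_bigr => j _; rewrite big_ord1 linearZ /=.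
by rewrite /partial deriveE.
Qed.

Lemma grad_eq (F : V -> R) :
  grad F = (fun y => \sum_i partial i F y *: @ebasis R n i).
Proof.
apply/funext => y; apply/matrixP => a b; rewrite !mxE summxE.
rewrite (bigD1 a) //= big1 => [|i ia]; rewrite !mxE.
  by rewrite eqxx (ord1 b) /= mulr1 addr0.
by rewrite eq_sym (negbTE ia) mulr0.
Qed.

Lemma grad_isd (F : V -> R) y : (forall i, differentiable (partial i F) y) ->
  is_diff y (grad F) (fun h => hessian F y *m h).
Proof.
move=> dF; rewrite grad_eq.
have -> : (fun h => hessian F y *m h) =
    (fun h => \sum_i 'd (partial i F) y h *: @ebasis R n i).
  apply/funext => h; apply/matrixP => a b; rewrite summxE.
  rewrite (bigD1 a) //= big1 => [|i ia]; last first.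
    by rewrite mxE /ebasis mxE eq_sym (negbTE ia) mulr0.
  rewrite /ebasis !mxE eqxx (ord1 b) /= mulr1 addr0 dexpand //.
  by apply: eq_bigr => j _; rewrite mxE mulrC.
apply: isd_sum => i; apply: DiffDef; first exact: differentiableZl.
exact: diffZl.
Qed.

End Grad.

Lemma dsub_block m1 m2 k (M : 'M[R]_(m1 + m2)) (a : 'M[R]_(m1, k)) b :
  dsubmx (M *m col_mx a b) = dlsubmx M *m a + drsubmx M *m b.
Proof. by rewrite -{1}(submxK M) mul_block_col col_mxKd. Qed.

End Aux.

Unset Implicit Arguments.
Set Strict Implicit.

Theorem lemma3p2 (R : realType) (n : nat) (s : scheme)
  (D O : set 'cV[R]_(n.+1 + n)) (F : 'cV[R]_(n.+1 + n) -> R)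
  (thetas : 'cV[R]_(n.+1 + n)) :
  (1 <= n)%N -> open D -> C2_on D F ->
  open O -> O `<=` D -> invertibility s D O F ->
  O thetas -> Gmap s F thetas = thetas ->
  sym_pos_def (hessian F thetas) ->
  differentiable (Gmap s F) thetas /\
  forall v : 'cV[R]_(n.+1 + n),
    'd (Gmap s F) thetas v =
    (1%:M - invmx (Bmat F thetas) *m hessian F thetas) *m v.
Proof.
move=> _ oD [dF [dP cP]] oO OD inv Ox hfix _.
set x := thetas in Ox hfix *.
have Dx := OD _ Ox.
have [u11 inv2] := inv x Ox.
have fx1 : G1 F x = usubmx x by have := congr1 usubmx hfix; rewrite /Gmap col_mxKu.
have fx2 : G2 s F x = dsubmx x by have := congr1 dsubmx hfix; rewrite /Gmap col_mxKd.
have gc0 : gradc F x = 0.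
  have e : invmx (H11 F x) *m gradc F x = 0.
    move: fx1; rewrite /G1 => /eqP; rewrite subr_eq addrC -subr_eq subrr eq_sym.
    by move/eqP.
  by rewrite -(mulKVmx u11 (gradc F x)) e mulmx0.
have u22 : H22 F x \in unitmx.
  case: s inv hfix inv2 fx2 => _ _ /= i2 _; first exact: i2.
  by move: i2; rewrite fx1 vsubmxK => -[].
have gb0 : gradb F x = 0.
  have e : invmx (H22 F x) *m gradb F x = 0.
    case: s inv hfix inv2 fx2 => _ _ /= _.
      rewrite fx1 subrr mulmx0 addr0 => /eqP.
      rewrite subr_eq addrC -subr_eq subrr eq_sym.
      by move/eqP.
    rewrite fx1 vsubmxK => /eqP.
    rewrite subr_eq addrC -subr_eq subrr eq_sym.
    by move/eqP.
  by rewrite -(mulKVmx u22 (gradb F x)) e mulmx0.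
have grad0 : grad F x = 0.
  by rewrite -(vsubmxK (grad F x)) -/(gradc F x) -/(gradb F x) gc0 gb0 col_mx0.
pose N := (n.+1 + n)%N.
pose P1 : 'M[R]_(n.+1, N) := row_mx 1%:M 0.
pose P2 : 'M[R]_(n, N) := row_mx 0 1%:M.
pose C1 : 'M[R]_(N, n.+1) := col_mx 1%:M 0.
pose C2 : 'M[R]_(N, n) := col_mx 0 1%:M.
pose Hs := hessian F x.
have hc : {for x, continuous (hessian F)}.
  apply: (mx_cvg (F := nbhs x)) => i j; rewrite mxE.
  under eq_cvg do rewrite mxE.
  exact: cP.
have c11 : {for x, continuous (fun y => invmx (H11 F y))}.
  have : {for x, continuous (H11 F)}.
    apply: (continuous_comp hc).
    by apply: (cont_entries (f := @ulsubmx R n.+1 n n.+1 n) (r := lshift n) (c := lshift n)) => M a b; rewrite !mxE.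
  move/continuous_comp; apply; exact: invmx_cont.
have c21 : {for x, continuous (H21 F)}.
  apply: (continuous_comp hc).
  by apply: (cont_entries (f := @dlsubmx R n.+1 n n.+1 n) (r := @rshift n.+1 n) (c := lshift n)) => M a b; rewrite !mxE.
have c22' : {for x, continuous (H22 F)}.
  apply: (continuous_comp hc).
  by apply: (cont_entries (f := @drsubmx R n.+1 n n.+1 n) (r := @rshift n.+1 n) (c := @rshift n.+1 n)) => M a b; rewrite !mxE.
have c22 : {for x, continuous (fun y => invmx (H22 F y))}.
  move/continuous_comp: c22'; apply; exact: invmx_cont.
have Hid : is_diff x (fun y : 'cV[R]_N => y) (fun h => h) := is_diff_id x.
have dgr : is_diff x (grad F) (fun h => Hs *m h) := grad_isd (fun i => dP i x Dx).
pose dG1f := fun h : 'cV[R]_N => P1 *m h - invmx (H11 F x) *m (P1 *m (Hs *m h)).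
have G1eq : G1 F = fun y => P1 *m y - invmx (H11 F y) *m (P1 *m grad F y).
  by apply/funext => y; rewrite /G1 /gradc !usub_mul.
have dG1 : is_diff x (G1 F) dG1f.
  rewrite G1eq; apply: isdB; first exact: (isd_mul _ Hid).
  apply: (prod_isd c11 (isd_mul _ dgr)).
  by rewrite grad0 mulmx0.
pose dG2f := fun h : 'cV[R]_N => P2 *m h - invmx (H22 F x) *m
  (P2 *m (Hs *m h) + H21 F x *m (dG1f h - P1 *m h)).
have dG2 : is_diff x (G2 s F) dG2f.
  move: inv2 fx2; case: s inv hfix => _ _ i2 f2 /=.
    have G2eq : G2 LGS F = fun y => P2 *m y - invmx (H22 F y) *m
        (P2 *m grad F y + H21 F y *m (G1 F y - P1 *m y)).
      by apply/funext => y; rewrite /G2 /= /gradb /P1 /P2 !dsub_mul usub_mul.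
    rewrite G2eq; apply: isdB; first exact: (isd_mul _ Hid).
    have dk := isdB dG1 (isd_mul P1 Hid).
    have k0 : G1 F x - P1 *m x = 0 by rewrite fx1 /P1 -usub_mul subrr.
    have dt := prod_isd c21 dk k0.
    have du := isdD (isd_mul P2 dgr) dt.
    apply: (prod_isd c22 du).
    by rewrite grad0 mulmx0 k0 mulmx0 addr0.
  pose phi := fun y => C1 *m G1 F y + C2 *m (P2 *m y).
  have phx : phi x = x by rewrite /phi fx1 /P2 /C1 /C2 -dsub_mul -col_mul vsubmxK.
  have G2eq : G2 NLGS F = fun y => P2 *m y - invmx (H22 F (phi y)) *m
        (P2 *m grad F (phi y)).
    by apply/funext => y; rewrite /G2 /= /gradb /phi /P2 /C1 /C2 -!dsub_mul -col_mul.
  have dphi := isdD (isd_mul C1 dG1) (isd_mul C2 (isd_mul P2 Hid)).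
  have dgr' : is_diff (phi x) (grad F) (fun h => Hs *m h) by rewrite phx.
  have dg := isd_mul P2 (isd_comp dphi dgr').
  have g0 : P2 *m grad F (phi x) = 0 by rewrite phx grad0 mulmx0.
  have cphi : {for x, continuous phi} :=
    differentiable_continuous (ex_diff (is_diff_def := dphi)).
  have cB : {for phi x, continuous (fun z => invmx (H22 F z))} by rewrite phx.
  have cA := continuous_comp cphi cB.
  suff dE : (fun h => P2 *m h - invmx (H22 F (phi x)) *m (P2 *m (Hs *m
      (C1 *m dG1f h + C2 *m (P2 *m h))))) = dG2f.
    rewrite G2eq -dE; exact: (isdB (isd_mul P2 Hid) (prod_isd cA dg g0)).
  rewrite phx.
  apply/funext => h; rewrite /dG2f; congr (_ - _ *m _).
  move: (dG1f h) => a.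
  rewrite /P1 /P2 /C1 /C2 -!dsub_mul -usub_mul -col_mul dsub_block.
  have eh : dsubmx (Hs *m h) = dlsubmx Hs *m usubmx h + drsubmx Hs *m dsubmx h.
    by rewrite -dsub_block vsubmxK.
  rewrite eh /H21 -/Hs mulmxBr addrAC [_ *m usubmx h + _]addrC subrK.
  by [].
have Geq : Gmap s F = fun y => C1 *m G1 F y + C2 *m G2 s F y.
  by apply/funext => y; rewrite /Gmap col_mul.
have dG : is_diff x (Gmap s F) (fun h => C1 *m dG1f h + C2 *m dG2f h).
  rewrite Geq; apply: isdD; exact: isd_mul.
split; first exact: (ex_diff (is_diff_def := dG)).
move=> v; rewrite (diff_val (is_diff_def := dG)).
have uB : Bmat F x \in unitmx.
  by rewrite unitmxE /Bmat det_lblock unitrM -!unitmxE u11 u22.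
rewrite -col_mul /dG1f /dG2f /P1 /P2 -!usub_mul -!dsub_mul.
rewrite mulmxBl mul1mx -mulmxA.
set w := col_mx _ _.
suff E : v - w = invmx (Bmat F x) *m (Hs *m v).
  by rewrite -E opprB addrC subrK.
rewrite -[v - w](mulKmx uB); congr (_ *m _).
rewrite /w -{1}(vsubmxK v) opp_col_mx add_col_mx /Bmat mul_block_col.
rewrite -[RHS](vsubmxK (Hs *m v)); congr col_mx.
  by rewrite subKr mul0mx addr0 mulKVmx.
rewrite subKr [X in H22 F x *m X]subKr mulKVmx //.
rewrite /dG1f /P1 -!usub_mul addrAC subrr add0r mulmxN.
by rewrite addrC subrK.

Qed.
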